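(* Let $d\in\mathbb{N}$, $d\geq 2$, $r>0$ and let $A\subseteq \mathbb{R}^{d}$ be $r$-separated. Then there exists a $16\max\{\frac{3d}{r},1\}$-bilipschitz mapping $\Phi\colon \mathbb{R}^{d}\to\mathbb{R}^{d}$ such that $\Phi(A)\subseteq \mathbb{Z}^{d}$.
   Context: $A$ is $r$-separated if $\|a-a'\|\geq r$ for all distinct $a,a'\in A$ (Euclidean norm). A mapping is $L$-bilipschitz if it is injective and both it and its inverse are $L$-Lipschitz. *)

(* Defs.v *)
From mathcomp Require Import all_boot all_order all_algebra.
From Stdlib Require Import Reals.
From mathcomp Require Import Rstruct.
Set Implicit Arguments. Unset Strict Implicit. Unset Printing Implicit Defensive.
Import Order.TTheory GRing.Theory Num.Theory.
Local Open Scope ring_scope.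

Definition eucl_norm (d : nat) (x : 'rV[R]_d) : R :=
  Num.sqrt (\sum_(i < d) x 0 i ^+ 2).

Definition dist (d : nat) (x y : 'rV[R]_d) : R := eucl_norm (x - y).

Definition r_separated (d : nat) (r : R) (A : 'rV[R]_d -> Prop) : Prop :=
  forall a a', A a -> A a' -> a <> a' -> r <= dist a a'.

Definition lipschitz (d : nat) (L : R) (f : 'rV[R]_d -> 'rV[R]_d) : Prop :=
  forall x y, dist (f x) (f y) <= L * dist x y.

Definition bilipschitz (d : nat) (L : R) (f : 'rV[R]_d -> 'rV[R]_d) : Prop :=
  injective f /\ lipschitz L f /\
  (forall x y, dist x y <= L * dist (f x) (f y)).

Definition is_integer_point (d : nat) (z : 'rV[R]_d) : Prop :=
  forall i, exists k : int, z 0 i = k%:~R.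

(* Main.v *)
Require Import Defs.
From mathcomp Require Import all_boot all_order all_algebra.
From Stdlib Require Import Reals.
From mathcomp Require Import Rstruct.
From Stdlib Require Import Classical ClassicalEpsilon.
From mathcomp Require Import ring lra.
Import Order.TTheory GRing.Theory Num.Theory.
Set Implicit Arguments. Unset Strict Implicit.
Local Open Scope ring_scope.
Section Norm.
Variable d : nat.
Implicit Types x y : 'rV[R]_d.

Definition SS x : R := \sum_(i < d) x 0 i ^+ 2.
Definition PP x y : R := \sum_(i < d) x 0 i * y 0 i.

Lemma SS_ge0 x : 0 <= SS x.
Proof. by apply: sumr_ge0 => i _; apply: sqr_ge0. Qed.

Lemma N_ge0 x : 0 <= eucl_norm x.
Proof. exact: sqrtr_ge0. Qed.

Lemma N_sq x : eucl_norm x ^+ 2 = SS x.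
Proof. by rewrite /eucl_norm sqr_sqrtr // SS_ge0. Qed.

Lemma SS_add x y : SS (x + y) = SS x + 2 * PP x y + SS y.
Proof.
rewrite /SS /PP.
transitivity (\sum_(i < d) (x 0 i ^+ 2 + 2 * (x 0 i * y 0 i) + y 0 i ^+ 2)).
  by apply: eq_bigr => i _; rewrite mxE; ring.
by rewrite !big_split /= -mulr_sumr.
Qed.

Lemma SS0 x : SS x = 0 -> x = 0.
Proof.
move=> H; apply/matrixP => i j; rewrite (ord1 i) mxE.
have := psumr_eq0P (fun k _ => sqr_ge0 (x 0 k)) H (i := j) isT.
by move/eqP; rewrite sqrf_eq0 => /eqP.
Qed.

Lemma CS x y : PP x y <= eucl_norm x * eucl_norm y.
Proof.
set a := eucl_norm x; set b := eucl_norm y.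
have ha : a ^+ 2 = SS x by apply: N_sq.
have hb : b ^+ 2 = SS y by apply: N_sq.
have H : 0 <= \sum_(i < d) (b * x 0 i - a * y 0 i) ^+ 2.
  by apply: sumr_ge0 => i _; apply: sqr_ge0.
have E : \sum_(i < d) (b * x 0 i - a * y 0 i) ^+ 2
   = b ^+ 2 * SS x - 2 * a * b * PP x y + a ^+ 2 * SS y.
  rewrite /SS /PP mulr_sumr mulr_sumr mulr_sumr -sumrN -!big_split /=.
  by apply: eq_bigr => i _; ring.
rewrite E -ha -hb in H.
have a0 : 0 <= a by apply: N_ge0.
have b0 : 0 <= b by apply: N_ge0.
have [ab0|abgt] := eqVneq (a * b) 0.
  move/eqP: ab0; rewrite mulf_eq0 => /orP[] /eqP z.
  - have : x = 0 by apply: SS0; rewrite -ha z; ring.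
    move=> ->; rewrite /PP big1 ?z ?mul0r // => i _; rewrite mxE mul0r //.
  - have : y = 0 by apply: SS0; rewrite -hb z; ring.
    move=> ->; rewrite /PP big1 ?z ?mulr0 // => i _; rewrite mxE mulr0 //.
have abp : 0 < a * b by rewrite lt_def abgt mulr_ge0.
have H2 : 0 <= (a * b) * (2 * (a * b - PP x y)).
  suff -> : (a * b) * (2 * (a * b - PP x y)) = b ^+ 2 * a ^+ 2 - 2 * a * b * PP x y + a ^+ 2 * b ^+ 2 by [].
  ring.
rewrite pmulr_rge0 // in H2.
lra.
Qed.

Lemma N_add x y : eucl_norm (x + y) <= eucl_norm x + eucl_norm y.
Proof.
have h0 : 0 <= eucl_norm x + eucl_norm y by rewrite addr_ge0 // N_ge0.
rewrite -(ger0_norm h0) -sqrtr_sqr /eucl_norm.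
apply: ler_wsqrtr; rewrite -/(SS (x + y)) SS_add.
have := CS x y; have := N_sq x; have := N_sq y.
rewrite /eucl_norm => e1 e2 c.
rewrite -e1 -e2. lra.
Qed.

Lemma N_scale c x : eucl_norm (c *: x) = `|c| * eucl_norm x.
Proof.
rewrite /eucl_norm.
have -> : \sum_(i < d) (c *: x) 0 i ^+ 2 = c ^+ 2 * \sum_(i < d) x 0 i ^+ 2.
  by rewrite mulr_sumr; apply: eq_bigr => i _; rewrite mxE; ring.
by rewrite sqrtrM ?sqr_ge0 // sqrtr_sqr.
Qed.

Lemma N_opp x : eucl_norm (- x) = eucl_norm x.
Proof. by rewrite -scaleN1r N_scale normrN normr1 mul1r. Qed.

Lemma Nzero : eucl_norm (0 : 'rV[R]_d) = 0.
Proof. by rewrite -(scale0r (0 : 'rV[R]_d)) N_scale normr0 mul0r. Qed.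

Lemma N_eq0 x : eucl_norm x = 0 -> x = 0.
Proof.
move=> H; apply: SS0; by rewrite -N_sq H expr0n.
Qed.

Lemma N_sym x y : eucl_norm (x - y) = eucl_norm (y - x).
Proof. by rewrite -N_opp opprB. Qed.

Lemma N_tri x y z : eucl_norm (x - z) <= eucl_norm (x - y) + eucl_norm (y - z).
Proof.
have -> : x - z = (x - y) + (y - z) by rewrite addrA subrK.
exact: N_add.
Qed.

Lemma N_sub x y : eucl_norm (x - y) <= eucl_norm x + eucl_norm y.
Proof. by rewrite -(N_opp y); apply: N_add. Qed.

End Norm.

Section Constr.
Variables (d : nat) (r : R) (A : 'rV[R]_d -> Prop).
Hypothesis d2 : leq 2 d.
Hypothesis r0 : 0 < r.
Hypothesis sepA : r_separated r A.

Let dR := (d%:R : R).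
Definition sc := Num.max (4 * dR / r) 1.
Definition rho := 2 * dR.

Lemma dR1 : 1 <= dR.
Proof. by rewrite /dR ler1n; apply: leq_trans d2. Qed.

Lemma sc1 : 1 <= sc.
Proof. by rewrite /sc le_max lexx orbT. Qed.

Lemma sc_r : 4 * dR <= sc * r.
Proof.
have h : 4 * dR / r <= sc by rewrite /sc le_max lexx.
have := ler_wpM2r (ltW r0) h.
by rewrite divfK // gt_eqF.
Qed.

Definition zz (a : 'rV[R]_d) : 'rV[R]_d :=
  \row_i ((Num.floor (sc * a 0 i))%:~R : R).
Definition vv a := zz a - sc *: a.

Lemma vv_le a : eucl_norm (vv a) <= dR.
Proof.
have h1 : SS (vv a) <= dR.
  rewrite /SS /dR -[d in d%:R]card_ord -sumr_const.
  apply: ler_sum => i _; rewrite !mxE.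
  have := floor_itv (sc * a 0 i); rewrite intrD => /andP[h h'].
  have : 0 <= sc * a 0 i - (Num.floor (sc * a 0 i))%:~R < 1 by apply/andP; split; lra.
  move=> /andP[e1 e2].
  rewrite -sqrrN opprB; set t := _ - _ in e1 e2 *. nra.
have h0 : 0 <= dR by have := dR1; lra.
rewrite /eucl_norm -(ger0_norm h0) -sqrtr_sqr; apply: ler_wsqrtr.
have := dR1; rewrite -/(SS (vv a)). nra.
Qed.

Definition inball (y a : 'rV[R]_d) := A a /\ eucl_norm (y - sc *: a) < rho.

Definition G (y : 'rV[R]_d) : 'rV[R]_d :=
  match excluded_middle_informative (exists a, inball y a) with
  | left H => let a := proj1_sig (constructive_indefinite_description _ H) in
      (1 - eucl_norm (y - sc *: a) / rho) *: vv a
  | right _ => 0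
  end.

Lemma G_spec (y : 'rV[R]_d) :
  ((forall a, A a -> rho <= eucl_norm (y - sc *: a)) /\ G y = 0) \/
  exists a, inball y a /\ G y = (1 - eucl_norm (y - sc *: a) / rho) *: vv a.
Proof.
rewrite /G; case: excluded_middle_informative => [H|H].
  right; case: (constructive_indefinite_description _ H) => a Ha /=.
  by exists a.
left; split => // a Aa; rewrite leNgt; apply/negP => lt; apply: H; by exists a.
Qed.

Lemma scN (a b : 'rV[R]_d) : eucl_norm (sc *: a - sc *: b) = sc * eucl_norm (a - b).
Proof.
by rewrite -scalerBr N_scale ger0_norm //; have := sc1; lra.
Qed.

Lemma far (a b : 'rV[R]_d) : A a -> A b -> a <> b -> 2 * rho <= eucl_norm (sc *: a - sc *: b).
Proof.
move=> Aa Ab ab; rewrite scN.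
have := sepA Aa Ab ab; rewrite /dist => h.
have := sc_r; have := sc1; rewrite /rho => s1 s2.
have : sc * r <= sc * eucl_norm (a - b) by rewrite ler_wpM2l //; lra.
move=> h2; apply: le_trans h2; lra.
Qed.

Lemma inball_uniq (y a b : 'rV[R]_d) : inball y a -> inball y b -> a = b.
Proof.
move=> [Aa ha] [Ab hb]; case: (classic (a = b)) => // ab.
have := far Aa Ab ab.
have := N_tri (sc *: a) y (sc *: b).
rewrite N_sym in ha => h1 h2; exfalso; lra.
Qed.

Lemma rho_gt0 : 0 < rho.
Proof. rewrite /rho; have := dR1; lra. Qed.

Lemma Gbound (y a : 'rV[R]_d) : inball y a ->
  eucl_norm ((1 - eucl_norm (y - sc *: a) / rho) *: vv a)
   <= (rho - eucl_norm (y - sc *: a)) / 2.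
Proof.
move=> [_ h]; rewrite N_scale.
set t := eucl_norm _ in h *.
have rp := rho_gt0.
have t0 : 0 <= t by apply: N_ge0.
have c0 : 0 <= 1 - t / rho.
  rewrite subr_ge0 ler_pdivrMr // mul1r; lra.
rewrite ger0_norm //.
have := vv_le a; have := N_ge0 (vv a) => n0 n1.
have e : 1 - t / rho = (rho - t) / rho by field; lra.
have : (1 - t / rho) * eucl_norm (vv a) <= (1 - t / rho) * dR by rewrite ler_wpM2l.
suff -> : (1 - t / rho) * dR = (rho - t) / 2 by [].
rewrite /rho; field; have := dR1; lra.
Qed.

Lemma G_lip (y y' : 'rV[R]_d) : eucl_norm (G y - G y') <= eucl_norm (y - y') / 2.
Proof.
have hy0 := N_ge0 (y - y').
have one_side : forall y y' a, inball y a -> (forall b, inball y' b -> b = a) ->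
   eucl_norm (G y) <= eucl_norm (y - y') / 2 \/ True.
  by move=> *; right.
case: (G_spec y) => [[fy ->]|[a [ia ->]]];
case: (G_spec y') => [[fy' ->]|[b [ib ->]]].
- by rewrite subrr Nzero; lra.
- rewrite sub0r N_opp.
  have := Gbound ib; have := fy _ ib.1.
  have := N_tri y y' (sc *: b); rewrite (N_sym y y'). lra.
- rewrite subr0.
  have := Gbound ia; have := fy' _ ia.1.
  have := N_tri y' y (sc *: a); rewrite (N_sym y' y). lra.
- have [eab|nab] := eqVneq a b.
    subst b.
    rewrite -scalerBl N_scale.
    set t := eucl_norm (y - sc *: a); set t' := eucl_norm (y' - sc *: a).
    have e : 1 - t / rho - (1 - t' / rho) = (t' - t) / rho by field; have := rho_gt0; lra.
    have ri : 0 < rho^-1 by rewrite invr_gt0 rho_gt0.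
    rewrite e normrM (gtr0_norm ri).
    have h1 : `|t' - t| <= eucl_norm (y - y').
      rewrite ler_norml; apply/andP; split.
        have := N_tri y y' (sc *: a); rewrite -/t -/t'; lra.
      have := N_tri y' y (sc *: a); rewrite -/t -/t' (N_sym y' y); lra.
    have := vv_le a; have := N_ge0 (vv a); have := rho_gt0; have := dR1.
    rewrite /rho => q1 q2 q3 q4.
    have h2 : `|t' - t| * eucl_norm (vv a) <= eucl_norm (y - y') * dR.
      apply: ler_pM => //; exact: normr_ge0.
    have -> : `|t' - t| / (2 * dR) * eucl_norm (vv a) = (`|t' - t| * eucl_norm (vv a)) / (2 * dR) by field; lra.
    rewrite ler_pdivrMr; last by lra.
    lra.
  have := far ia.1 ib.1 (fun e => negP nab (introT eqP e)).
  have := N_tri (sc *: a) y (sc *: b); have := N_tri y y' (sc *: b).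
  rewrite (N_sym (sc *: a) y).
  have := N_sub ((1 - eucl_norm (y - sc *: a) / rho) *: vv a)
                ((1 - eucl_norm (y' - sc *: b) / rho) *: vv b).
  have := Gbound ia; have := Gbound ib.
  lra.
Qed.

End Constr.

Theorem lemma4p1 (d : nat) (r : R) (A : 'rV[R]_d -> Prop) :
  (leq 2 d) -> (0 : R) < r -> r_separated r A ->
  exists Phi : 'rV[R]_d -> 'rV[R]_d,
    bilipschitz (16 * Num.max (3 * (d%:R : R) / r) 1) Phi /\
    (forall a, A a -> is_integer_point (Phi a)).
Proof.
move=> d2 r0 sepA.
set s := sc d r.
set Phi := fun x : 'rV[R]_d => s *: x + G r A (s *: x).
have s1 : 1 <= s by apply: sc1.
set M := Num.max (3 * (d%:R : R) / r) 1.
have M1 : 1 <= M by rewrite /M le_max lexx orbT.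
have sM : s <= 2 * M.
  rewrite /s /sc ge_max; apply/andP; split.
    have h : 3 * ((d%:R : R) / r) <= M by rewrite mulrA /M le_max lexx.
    have hd : 0 <= (d%:R : R) / r by rewrite divr_ge0 ?ler0n ?ltW.
    have -> : 4 * (d%:R : R) / r = 4 * ((d%:R : R) / r) by rewrite mulrA.
    lra.
  lra.
have diff : forall x x', Phi x - Phi x' = s *: (x - x') + (G r A (s *: x) - G r A (s *: x')).
  by move=> x x'; rewrite /Phi scalerBr opprD addrACA.
have Gl : forall x x', eucl_norm (G r A (s *: x) - G r A (s *: x')) <= s * eucl_norm (x - x') / 2.
  move=> x x'; have := G_lip d2 r0 sepA (s *: x) (s *: x').
  by rewrite scN //.
have up : forall x x', eucl_norm (Phi x - Phi x') <= 3 / 2 * s * eucl_norm (x - x').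
  move=> x x'; rewrite diff; apply: le_trans (N_add _ _) _.
  rewrite N_scale ger0_norm; last lra.
  have := Gl x x'; lra.
have low : forall x x', eucl_norm (x - x') <= 2 * eucl_norm (Phi x - Phi x').
  move=> x x'.
  have e : s *: (x - x') = (Phi x - Phi x') - (G r A (s *: x) - G r A (s *: x')).
    by rewrite diff addrK.
  have := N_sub (Phi x - Phi x') (G r A (s *: x) - G r A (s *: x')).
  rewrite -e N_scale ger0_norm; last lra.
  have := Gl x x'; have := N_ge0 (x - x').
  move=> h0 h1 h2.
  have : eucl_norm (x - x') <= s * eucl_norm (x - x').
    by rewrite ler_peMl.
  lra.
exists Phi; split.
  split.
    move=> x x' e; apply/eqP; rewrite -subr_eq0; apply/eqP; apply: N_eq0.
    have := low x x'; rewrite e subrr Nzero mulr0 => h.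
    by apply/le_anti; rewrite h N_ge0.
  split.
    move=> x x'; rewrite /dist; apply: le_trans (up x x') _.
    apply: ler_wpM2r; first exact: N_ge0.
    rewrite RmultE IZRposE INRE /=; lra.
  move=> x x'; rewrite /dist; apply: le_trans (low x x') _.
  apply: ler_wpM2r; first exact: N_ge0.
  rewrite RmultE IZRposE INRE /=; lra.
move=> a Aa i.
have ia : inball r A (s *: a) a by split => //; rewrite subrr Nzero (rho_gt0 d2).
have Ga : G r A (s *: a) = vv r a.
  case: (G_spec r A (s *: a)) => [[f _]|[b [ib ->]]].
    have := f a Aa; rewrite subrr Nzero => h.
    have := rho_gt0 d2 => h2; exfalso; lra.
  have <- := inball_uniq r0 sepA ia ib.
  by rewrite subrr Nzero mul0r subr0 scale1r.
exists (Num.floor (s * a 0 i)).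
by rewrite /Phi Ga /vv addrC subrK /zz mxE.
Qed.
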